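(* Let $m\ge2$, $N=2m$, and let $G$ be the ''dense center'' graph: vertices $c_1,\dots,c_m$ forming a complete graph, together with leaves $\ell_1,\dots,\ell_m$, where $\ell_j$ is adjacent only to $c_j$. Then $n_{\max}(G)=m$, the roots are $c_1,\dots,c_m$, and $\beta_C^G=\tfrac32N-1$. Let $\mathcal L\subseteq\{\ell_1,\dots,\ell_m\}$ with $|\mathcal L|<m$, let $j$ be such that $\ell_j\notin\mathcal L$, and $G'=G[V\setminus\mathcal L]$. Then $$\langle I_{c_j}^{G*}\rangle_\rho=\langle I_{c_j}^{G'*}\rangle_\rho=(2\sqrt2-1)m+N-1-(\sqrt2+1)|\mathcal L| .$$ Consequently $\langle I_{c_j}^{G'*}\rangle_\rho>\beta_C^{G'}$ if and only if $|\mathcal L|<\frac{\sqrt2-1}{\sqrt2}N$, and $\langle I_{c_j}^{G*}\rangle_\rho>\beta_C^{G}$ if and only if $|\mathcal L|<\frac{\sqrt2-1}{\sqrt2+1}N$.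
   Context: Qubits are labelled $1,\dots,N$; $X_i,Z_i$ denote the Pauli $X$ and $Z$ operators on qubit $i$. For a graph $H$ with vertex set $V(H)\subseteq\{1,\dots,N\}$, $\mathcal N_i^H$ is the neighbour set of $i$, $\overline{\mathcal N_i^H}=\mathcal N_i^H\cup\{i\}$, $n_{\max}(H)$ the maximum degree; a root is a vertex of degree $n_{\max}(H)$. $S_i^H=X_i\prod_{j\in\mathcal N_i^H}Z_j$. The graph state $|\phi^G\rangle$ is the unique state with $S_i^G|\phi^G\rangle=|\phi^G\rangle$ for all $i$. For a vertex $r$ of $H$, $I_r^{H*}=\sqrt2\,n_{\max}(H)S_r^H+\sqrt2\sum_{i\in\mathcal N_r^H}S_i^H+\sum_{i\in V(H)\setminus\overline{\mathcal N_r^H}}S_i^H$, and $\beta_C^H=n_{\max}(H)+|V(H)|-1$. For lost set $\mathcal L$, $G'=G[V\setminus\mathcal L]$ (labels kept, identity on $\mathcal L$) and $\rho=\mathrm{Tr}_{\mathcal L}(|\phi^G\rangle\langle\phi^G|)\otimes\bigotimes_{l\in\mathcal L}|0\rangle\langle0|_l$; $\langle A\rangle_\rho=\mathrm{Tr}(A\rho)$. *)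

(* Defs.v *)
From HB Require Import structures.
From mathcomp Require Import all_boot all_order all_algebra all_field.
Set Implicit Arguments. Unset Strict Implicit. Unset Printing Implicit Defensive.
Import Order.TTheory GRing.Theory Num.Theory.
Local Open Scope ring_scope.

(* Qubits are labelled by 'I_N (0-based: qubit i+1 of the paper is i).
   The computational basis of (C^2)^{\otimes N} is indexed by a : 'I_(2^N);
   the state of qubit i in basis vector a is the i-th binary digit of a. *)
Definition qbit (a i : nat) : bool := odd (a %/ 2 ^ i).

Section Ops.
Variable N : nat.
Notation Op := 'M[algC]_(2 ^ N).

Definition Xop (i : 'I_N) : Op :=
  \matrix_(a, b) ([forall k : 'I_N, qbit b k == (qbit a k (+) (k == i))] %:R).
Definition Zop (i : 'I_N) : Op :=
  \matrix_(a, b) ((a == b)%:R * (-1) ^+ qbit a i).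

Record graph := Graph { gV : {set 'I_N}; gadj : rel 'I_N }.

Definition nbrs (H : graph) (i : 'I_N) : {set 'I_N} :=
  [set j in gV H | gadj H i j && (j != i)].
Definition deg (H : graph) (i : 'I_N) : nat := #|nbrs H i|.
Definition nmax (H : graph) : nat := \max_(i in gV H) deg H i.
Definition is_root (H : graph) (r : 'I_N) : Prop := r \in gV H /\ deg H r = nmax H.

Definition induced (H : graph) (L : {set 'I_N}) : graph :=
  Graph (gV H :\: L) (gadj H).

Definition stab (H : graph) (i : 'I_N) : Op :=
  Xop i *m \big[mulmx/1%:M]_(j in nbrs H i) Zop j.

Definition Istar (H : graph) (r : 'I_N) : Op :=
  (sqrtC 2 * (nmax H)%:R) *: stab H r
  + sqrtC 2 *: (\sum_(i in nbrs H r) stab H i)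
  + \sum_(i in gV H :\: (r |: nbrs H r)) stab H i.

Definition betaC (H : graph) : algC := (nmax H)%:R + (#|gV H|)%:R - 1.

(* |phi^G> : a normalised joint +1 eigenvector of all S_i^G (unique up to phase) *)
Definition is_graph_state (G : graph) (psi : 'cV[algC]_(2 ^ N)) : Prop :=
  (forall i, i \in gV G -> stab G i *m psi = psi) /\
  \sum_a psi a 0 * (psi a 0)^* = 1.

Definition density (psi : 'cV[algC]_(2 ^ N)) : Op := psi *m (map_mx (fun x : algC => x^*) psi)^T.

Definition zero_on (L : {set 'I_N}) (a : nat) : bool := [forall l in L, ~~ qbit a l].
Definition agree_off (L : {set 'I_N}) (a b : nat) : bool :=
  [forall k : 'I_N, (k \notin L) ==> (qbit a k == qbit b k)].
Definition agree_on (L : {set 'I_N}) (a b : nat) : bool :=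
  [forall k in L, qbit a k == qbit b k].

(* Tr_L(P) \otimes \bigotimes_{l in L} |0><0|_l :
   entry (a,b) = [a_L = b_L = 0] * \sum_z P (a_{V\L} z) (b_{V\L} z) *)
Definition trace_out_reset (L : {set 'I_N}) (P : Op) : Op :=
  \matrix_(a, b)
    (if zero_on L a && zero_on L b then
       \sum_(a' : 'I_(2 ^ N) | agree_off L a a') \sum_(b' : 'I_(2 ^ N) | agree_off L b b' && agree_on L a' b')
          P a' b'
     else 0).

Definition lost_state (L : {set 'I_N}) (psi : 'cV[algC]_(2 ^ N)) : Op :=
  trace_out_reset L (density psi).

Definition expect (A rho : Op) : algC := \tr (A *m rho).

(* Dense center graph: centers c_k = k (k < m) form K_m; leaf l_k = m + k
   is adjacent only to c_k.  Intended with N = 2m. *)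
Definition dense_center (m : nat) : graph :=
  Graph [set: 'I_N]
    (fun i j : 'I_N => (i != j) &&
       [|| (i < m)%N && (j < m)%N, (i + m == j)%N | (j + m == i)%N]).

Definition leaves (m : nat) : {set 'I_N} := [set i : 'I_N | (m <= i)%N].

End Ops.

(* Main.v *)
Require Import Defs.
From HB Require Import structures.
From mathcomp Require Import all_boot all_order all_algebra all_field.
From mathcomp Require Import zify ring.
Import Order.TTheory GRing.Theory Num.Theory.
Local Open Scope ring_scope.
Set Implicit Arguments. Unset Strict Implicit. Unset Printing Implicit Defensive.

Lemma nat_bits_inj n a b : (a < 2^n)%N -> (b < 2^n)%N ->
  (forall k, (k < n)%N -> odd (a %/ 2^k) = odd (b %/ 2^k)) -> a = b.
Proof.
elim: n a b => [|n IH] a b.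
  by rewrite expn0 !ltnS !leqn0 => /eqP-> /eqP->.
move=> ha hb h.
rewrite -(odd_double_half a) -(odd_double_half b).
have h0 := h 0%N isT. rewrite !expn0 !divn1 in h0. rewrite h0.
congr (_ + _)%N. congr (_.*2).
apply: IH.
- by rewrite -divn2 ltn_divLR // mulnC -expnS.
- by rewrite -divn2 ltn_divLR // mulnC -expnS.
- move=> k hk. rewrite -!divn2 -!divnMA -expnS. exact: h.
Qed.

Section Bits.
Variable N : nat.
Notation T := {ffun 'I_N -> bool}.
Definition Bf (a : 'I_(2^N)) : T := [ffun k : 'I_N => qbit a k].

Lemma Bf_inj : injective Bf.
Proof.
move=> a b /ffunP h. apply: val_inj. apply: (@nat_bits_inj N) => //; try exact: ltn_ord.
move=> k hk. have := h (Ordinal hk). by rewrite !ffunE.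
Qed.

Lemma pow2_gt0 : (0 < 2^N)%N. Proof. by rewrite expn_gt0. Qed.
Definition a0 : 'I_(2^N) := Ordinal pow2_gt0.
Definition dec (f : T) : 'I_(2^N) := odflt a0 [pick a | Bf a == f].

Lemma BfK : cancel dec Bf.
Proof.
move=> f. have : f \in codom Bf.
  apply: inj_card_onto; first exact: Bf_inj.
  by rewrite card_ffun card_bool !card_ord.
move=> /codomP [a ->]. rewrite /dec. case: pickP => [b /eqP //|].
by move=> /(_ a); rewrite eqxx.
Qed.

Lemma decK : cancel Bf dec.
Proof. move=> a. apply: Bf_inj. by rewrite BfK. Qed.

Lemma qbit_dec (f : T) (k : 'I_N) : qbit (dec f) k = f k.
Proof. by rewrite -{2}(BfK f) ffunE. Qed.

Lemma sum_dec (R : nmodType) (F : 'I_(2^N) -> R) :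
  \sum_a F a = \sum_(f : T) F (dec f).
Proof. exact: (reindex dec (onW_bij _ (Bijective BfK decK))). Qed.

End Bits.


Section Ops2.
Variable N : nat.
Notation T := {ffun 'I_N -> bool}.
Notation Op := 'M[algC]_(2 ^ N).

Definition fl (f : T) (i : 'I_N) : T := [ffun k => f k (+) (k == i)].
Definition sg (S : {set 'I_N}) (f : T) : algC := \prod_(j in S) (-1) ^+ f j.

Lemma sum_delta (I : finType) (b : I) (F : I -> algC) :
  \sum_c (c == b)%:R * F c = F b.
Proof.
rewrite (bigD1 b) //= eqxx mul1r big1 ?addr0 // => c /negbTE ->; by rewrite mul0r.
Qed.

Lemma sum_delta' (I : finType) (b : I) (F : I -> algC) :
  \sum_c (b == c)%:R * F c = F b.
Proof. rewrite -(sum_delta b F). apply: eq_bigr => c _. by rewrite eq_sym. Qed.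

Lemma Xop_dec i f g : Xop i (dec f) (dec g) = (g == fl f i)%:R.
Proof.
rewrite mxE. congr (_%:R). congr (nat_of_bool _). apply/idP/idP.
- move=> /forallP h. apply/eqP/ffunP => k. have := h k. by rewrite !qbit_dec ffunE => /eqP.
- move=> /eqP ->. apply/forallP => k. by rewrite !qbit_dec ffunE.
Qed.

Lemma prodZ (s : seq 'I_N) (P : pred 'I_N) :
  \big[mulmx/1%:M]_(j <- s | P j) Zop j =
  \matrix_(a, b) ((a == b)%:R * \prod_(j <- s | P j) (-1) ^+ qbit a j) :> Op.
Proof.
elim: s => [|x s IH].
  rewrite !big_nil. apply/matrixP => a b. by rewrite !mxE big_nil mulr1.
rewrite big_cons; apply/matrixP => a b.
rewrite [RHS]mxE big_cons.
case: (P x); last by rewrite IH mxE.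
rewrite IH !mxE.
rewrite /Zop. under [LHS]eq_bigr => c _ do rewrite !mxE.
rewrite (bigD1 a) //= eqxx mul1r [X in _ + X]big1 ?addr0; first by rewrite mulrCA.
by move=> c; rewrite eq_sym => /negbTE ->; rewrite !mul0r.
Qed.

Lemma stab_dec (H : graph N) i f g :
  stab H i (dec f) (dec g) = (g == fl f i)%:R * sg (nbrs H i) g.
Proof.
rewrite /stab prodZ mxE. rewrite (sum_dec (fun c => Xop i (dec f) c * _)).
under eq_bigr => h _ do rewrite Xop_dec mxE.
rewrite (bigD1 g) //= eqxx mul1r [X in _ + X]big1 ?addr0.
  rewrite /sg. congr (_ * _). apply: eq_bigr => j _. by rewrite qbit_dec.
move=> h hg. case: (eqVneq (dec h) (dec g)) => [e|_]; last by rewrite mul0r mulr0.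
by move: hg; rewrite -(BfK h) e BfK eqxx.
Qed.

End Ops2.


Section Ops3.
Variable N : nat.
Notation T := {ffun 'I_N -> bool}.
Notation Op := 'M[algC]_(2 ^ N).
Variable L : {set 'I_N}.
Variable psi : 'cV[algC]_(2 ^ N).

Definition ps (f : T) := psi (dec f) 0.
Definition zL (f : T) := [forall l in L, ~~ f l].
Definition aoff (f g : T) := [forall k : 'I_N, (k \notin L) ==> (f k == g k)].
Definition aon (f g : T) := [forall k in L, f k == g k].
Definition zz (f : T) : T := [ffun k => (k \notin L) && f k].

Lemma zero_on_dec f : zero_on L (dec f) = zL f.
Proof. apply: eq_forallb => k. by rewrite qbit_dec. Qed.
Lemma agree_off_dec f g : agree_off L (dec f) (dec g) = aoff f g.
Proof. apply: eq_forallb => k. by rewrite !qbit_dec. Qed.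
Lemma agree_on_dec f g : agree_on L (dec f) (dec g) = aon f g.
Proof. apply: eq_forallb => k. by rewrite !qbit_dec. Qed.

Lemma sum_decP (R : nmodType) (P : pred 'I_(2^N)) (F : 'I_(2^N) -> R) :
  \sum_(a | P a) F a = \sum_(f : T | P (dec f)) F (dec f).
Proof. rewrite (reindex (@dec N)) //. apply: onW_bij. exact: (Bijective (@BfK N) (@decK N)). Qed.

Lemma dens_entry a b : density psi a b = psi a 0 * (psi b 0)^*.
Proof. by rewrite !mxE big_ord1 !mxE. Qed.

Lemma rho_entry g f : lost_state L psi (dec g) (dec f) =
  if zL g && zL f then
    \sum_(a | aoff g a) \sum_(b | aoff f b && aon a b) ps a * (ps b)^*
  else 0.
Proof.
rewrite /lost_state /trace_out_reset mxE !zero_on_dec.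
case: (_ && _) => //.
rewrite sum_decP. apply: eq_big => a; first by rewrite agree_off_dec.
move=> _. rewrite sum_decP. apply: eq_big => b.
  by rewrite agree_off_dec agree_on_dec.
by rewrite dens_entry.
Qed.

Lemma expect_sum (A rho : Op) : expect A rho = \sum_a \sum_b A a b * rho b a.
Proof. rewrite /expect /mxtrace. apply: eq_bigr => a _. by rewrite mxE. Qed.

Lemma cond_eq i (hi : i \notin L) (f a b : T) :
  [&& zL f, aoff (fl f i) a, aoff f b & aon a b] = (f == zz b) && (a == fl b i).
Proof.
apply/idP/idP.
- case/and4P => /forallP h1 /forallP h2 /forallP h3 /forallP h4.
  apply/andP; split; apply/eqP/ffunP => k; rewrite !ffunE.
  + case: (boolP (k \in L)) => kL /=.
      by have := h1 k; rewrite kL /= => /negbTE.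
    by have := h3 k; rewrite kL /= => /eqP.
  + case: (boolP (k \in L)) => kL /=.
      have ki : (k == i) = false by apply/eqP => e; move: hi; rewrite -e kL.
      by rewrite ki addbF; have := h4 k; rewrite kL /= => /eqP.
    have := h2 k; rewrite kL /= ffunE => /eqP <-.
    by have := h3 k; rewrite kL /= => /eqP ->.
- case/andP => /eqP -> /eqP ->.
  apply/and4P; split; apply/forallP => k; rewrite ?ffunE.
  + by apply/implyP => ->.
  + apply/implyP => kL. by rewrite kL.
  + apply/implyP => kL. by rewrite kL.
  + apply/implyP => kL.
    have ki : (k == i) = false by apply/eqP => e; move: hi; rewrite -e kL.
    by rewrite ki addbF.
Qed.


Lemma sum_if1 (I : finType) (x : I) (P : bool) (F : I -> algC) :
  \sum_y (if (y == x) && P then F y else 0) = if P then F x else 0.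
Proof.
rewrite (bigD1 x) //= eqxx /= big1 ?addr0 // => y /negbTE -> //.
Qed.

Lemma zL_fl f i : i \notin L -> zL (fl f i) = zL f.
Proof.
move=> hi. apply: eq_forallb => k. rewrite ffunE.
case: (boolP (k \in L)) => //= kL.
have -> : (k == i) = false by apply/eqP => e; move: hi; rewrite -e kL.
by rewrite addbF.
Qed.

Lemma sg_zz (S : {set 'I_N}) i b : i \notin L ->
  sg S (fl (zz b) i) = sg (S :\: L) (fl b i).
Proof.
move=> hi. rewrite /sg big_mkcond [RHS]big_mkcond. apply: eq_bigr => k _.
rewrite !ffunE inE. case: (boolP (k \in L)) => kL /=.
  have -> : (k == i) = false by apply/eqP => e; move: hi; rewrite -e kL.
  by case: (k \in S).
by [].
Qed.

Lemma collapse i (hi : i \notin L) (G : T -> T -> T -> algC) :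
  \sum_f (if zL f then \sum_(a | aoff (fl f i) a) \sum_(b | aoff f b && aon a b) G f a b
          else 0) = \sum_b G (zz b) (fl b i) b.
Proof.
transitivity (\sum_f \sum_a \sum_b
   (if [&& zL f, aoff (fl f i) a, aoff f b & aon a b] then G f a b else 0)).
  apply: eq_bigr => f _.
  case: (zL f) => /=; last by rewrite big1 // => a _; rewrite big1.
  rewrite big_mkcond; apply: eq_bigr => a _.
  case: (aoff (fl f i) a) => /=; last by rewrite big1.
  by rewrite big_mkcond.
rewrite exchange_big /=.
under eq_bigr => a _ do rewrite exchange_big /=.
rewrite exchange_big /=. apply: eq_bigr => b _.
under eq_bigr => a _ do under eq_bigr => f _ do rewrite (cond_eq hi).
under eq_bigr => a _ do rewrite sum_if1.
rewrite (bigD1 (fl b i)) //= eqxx big1 ?addr0 //.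
by move=> a /negbTE ->.
Qed.

Lemma expect_stab_out (H : graph N) i : i \notin L ->
  expect (stab H i) (lost_state L psi) =
  \sum_f sg (nbrs H i :\: L) (fl f i) * ps (fl f i) * (ps f)^*.
Proof.
move=> hi. rewrite expect_sum sum_dec.
under eq_bigr => f _ do rewrite sum_dec.
under eq_bigr => f _ do under eq_bigr => g _ do rewrite stab_dec -mulrA.
under eq_bigr => f _ do rewrite sum_delta rho_entry (zL_fl _ hi) andbb.
transitivity (\sum_f (if zL f then \sum_(a | aoff (fl f i) a)
   \sum_(b | aoff f b && aon a b) (sg (nbrs H i) (fl f i) * (ps a * (ps b)^*)) else 0)).
  apply: eq_bigr => f _. case: (zL f); last by rewrite mulr0.
  rewrite big_distrr; apply: eq_bigr => a _. by rewrite big_distrr.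
rewrite (collapse hi). apply: eq_bigr => b _.
by rewrite (sg_zz _ _ hi) mulrA.
Qed.

Lemma expect_stab_in (H : graph N) i : i \in L ->
  expect (stab H i) (lost_state L psi) = 0.
Proof.
move=> hi. rewrite expect_sum big1 // => a _; rewrite big1 // => b _.
rewrite -(decK a) -(decK b) stab_dec rho_entry.
case: eqP => [e|]; last by rewrite !mul0r.
case: ifP => [/andP [/forallP h1 /forallP h2]|]; last by rewrite mulr0.
exfalso. have := h1 i; have := h2 i. rewrite hi e /= [fl _ _ _]ffunE eqxx addbT. by move=> /negbTE ->.
Qed.

End Ops3.


Section Ops4.
Variable N : nat.
Notation T := {ffun 'I_N -> bool}.
Variable psi : 'cV[algC]_(2 ^ N).
Notation ps := (ps psi).

Lemma sign_conj (b : bool) : ((-1) ^+ b)^* = (-1) ^+ b :> algC.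
Proof. by case: b; rewrite ?expr0 ?expr1 ?rmorph1 ?rmorphN1. Qed.

Lemma signK (b : bool) : (-1) ^+ b * (-1) ^+ b = 1 :> algC.
Proof. by rewrite -signr_addb addbb. Qed.

Lemma stab_psi (H : graph N) i : stab H i *m psi = psi ->
  forall f, sg (nbrs H i) (fl f i) * ps (fl f i) = ps f.
Proof.
move=> h f. rewrite /ps -{2}h mxE sum_dec.
under eq_bigr => g _ do rewrite stab_dec -mulrA.
by rewrite sum_delta.
Qed.

Lemma norm_T : \sum_a psi a 0 * (psi a 0)^* = 1 -> \sum_f ps f * (ps f)^* = 1.
Proof. by rewrite sum_dec. Qed.

Lemma fl_invol i : involutive (fun f : T => fl f i).
Proof. move=> f. apply/ffunP => k. by rewrite !ffunE addbK. Qed.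

Lemma Q1 (H : graph N) i :
  stab H i *m psi = psi -> \sum_a psi a 0 * (psi a 0)^* = 1 ->
  \sum_f sg (nbrs H i) (fl f i) * ps (fl f i) * (ps f)^* = 1.
Proof.
move=> h hn. rewrite -(norm_T hn). apply: eq_bigr => f _. by rewrite (stab_psi h).
Qed.

Lemma Q0 (H : graph N) c l :
  stab H c *m psi = psi -> stab H l *m psi = psi ->
  l \in nbrs H c -> l != c -> nbrs H l = [set c] ->
  \sum_f sg (nbrs H c :\ l) (fl f c) * ps (fl f c) * (ps f)^* = 0.
Proof.
move=> hc hl lN lc Nl.
have sgD g : sg (nbrs H c :\ l) g = sg (nbrs H c) g * (-1) ^+ g l.
  rewrite /sg [in RHS](bigD1 l) //= mulrAC signK mul1r.
  apply: eq_bigl => k. by rewrite in_setD1 andbC.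
have e1 f : sg (nbrs H c :\ l) (fl f c) * ps (fl f c) * (ps f)^* =
            (-1) ^+ f l * (ps f * (ps f)^*).
  rewrite sgD [sg _ _ * _]mulrC -!mulrA (mulrA (sg _ _)) (stab_psi hc) ffunE (negbTE lc) addbF.
  by [].
under eq_bigr => f _ do rewrite e1.
set A := \sum_f _.
have e2 f : ps f * (ps f)^* = ps (fl f l) * (ps (fl f l))^*.
  rewrite -{1 2}(stab_psi hl f) Nl /sg big_set1 ffunE.
  rewrite rmorphM /= sign_conj.
  by rewrite mulrACA signK mul1r.
have hA : A = - A.
  rewrite {1}/A (reindex_inj (inv_inj (fl_invol l))) /=.
  rewrite /A -sumrN. apply: eq_bigr => f _.
  rewrite -e2 ffunE eqxx addbT. 
  by case: (f l); rewrite /= ?expr0 ?expr1 ?mulN1r ?mul1r ?opprK.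
have : A *+ 2 == 0 by rewrite mulr2n {2}hA subrr.
by rewrite mulrn_eq0 /= => /eqP.
Qed.

End Ops4.


Section Dense.
Variables m N : nat.
Hypothesis hm : (2 <= m)%N.
Hypothesis hN : N = (2 * m)%N.

Lemma N_gt0 : (0 < N)%N. Proof. rewrite hN. lia. Qed.

Lemma ltm (i : 'I_N) : (i < 2 * m)%N. Proof. rewrite -hN. exact: ltn_ord. Qed.

Definition pt (i : 'I_N) : 'I_N := Ordinal (ltn_pmod (i + m) N_gt0).

Lemma pt_val (i : 'I_N) : val (pt i) = if (i < m)%N then (i + m)%N else (i - m)%N.
Proof.
rewrite /=. move: (nat_of_ord i) (ltn_ord i) => n hn. rewrite hN in hn *. case: ifP => h.
  rewrite modn_small //. lia.
have -> : (n + m = 1 * (2 * m) + (n - m))%N by lia.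
rewrite modnMDl modn_small //. lia.
Qed.

Lemma ptK : involutive pt.
Proof.
move=> i. apply: val_inj. have hi := ltm i.
rewrite !pt_val /=. case: (ltnP i m) => h. rewrite ifF /=; lia. rewrite ifT /=; lia.
Qed.

Lemma pt_lt (i : 'I_N) : (pt i < m)%N = ~~ (i < m)%N.
Proof. have hi := ltm i. rewrite pt_val. case: ifP => h; lia. Qed.

Lemma pt_neq (i : 'I_N) : (pt i == i) = false.
Proof. apply/negbTE. rewrite -val_eqE pt_val /=. case: ifP => h; lia. Qed.

Notation G := (dense_center N m).

Lemma nbrs_c (i k : 'I_N) : (i < m)%N ->
  (k \in nbrs G i) = (k != i) && ((k < m)%N || (k == pt i)).
Proof.
move=> h. rewrite !inE /=. rewrite -!val_eqE pt_val h /=. have hk := ltm k. lia.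
Qed.

Lemma nbrs_l (i k : 'I_N) : ~~ (i < m)%N -> (k \in nbrs G i) = (k == pt i).
Proof.
move=> h. have hk := ltm k. have hi := ltm i.
rewrite !inE /=. rewrite -!val_eqE pt_val (negbTE h) /=. lia.
Qed.


Lemma split_sum (R : nmodType) (F : 'I_N -> R) :
  \sum_i F i = \sum_(i : 'I_N | (i < m)%N) (F i + F (pt i)).
Proof.
rewrite (bigID (fun i : 'I_N => (i < m)%N)) /= big_split /=. congr (_ + _).
rewrite (reindex_inj (inv_inj ptK)) /=. apply: eq_bigl => i. by rewrite pt_lt negbK.
Qed.

Lemma card_split (A : {set 'I_N}) :
  #|A| = \sum_(i : 'I_N | (i < m)%N) ((i \in A) + (pt i \in A))%N.
Proof.
rewrite -sum1_card big_mkcond split_sum. apply: eq_bigr => i _.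
by case: (i \in A); case: (pt i \in A).
Qed.

Lemma K_eq : \sum_(i : 'I_N | (i < m)%N) 1%N = m.
Proof.
have := card_split setT. rewrite cardsT card_ord.
under eq_bigr => i _ do rewrite !inE.
set K := \sum_(i < N | _) 1%N. move=> h.
have e : N = (K + K)%N by rewrite h -big_split.
clearbody K. move: K e => K e. lia.
Qed.

Definition c0 : 'I_N := Ordinal N_gt0.

Lemma deg_c (c : 'I_N) : (c < m)%N -> deg G c = m.
Proof.
move=> hc. rewrite /deg card_split -[RHS]K_eq. apply: eq_bigr => i hi.
rewrite !nbrs_c // hi /=.
have e1 : (pt i == c) = false.
  apply/negbTE/eqP => e. move: (pt_lt i). by rewrite e hc hi.
by rewrite e1 (inj_eq (inv_inj ptK)) pt_lt hi /=; case: eqP.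
Qed.

Lemma nbrs_leaf (l : 'I_N) : (m <= l)%N -> nbrs G l = [set pt l].
Proof. move=> h. apply/setP => k. by rewrite nbrs_l -?leqNgt // inE. Qed.

Lemma deg_l (l : 'I_N) : (m <= l)%N -> deg G l = 1%N.
Proof. move=> h. by rewrite /deg nbrs_leaf // cards1. Qed.

Lemma nmaxG : nmax G = m.
Proof.
apply/eqP; rewrite eqn_leq; apply/andP; split.
  apply/bigmax_leqP => i _. case: (ltnP i m) => h; first by rewrite deg_c.
  rewrite deg_l //; lia.
have h0 : (c0 < m)%N by rewrite /=; lia.
rewrite -{1}(deg_c h0). apply: (@leq_bigmax_cond _ (fun i => i \in gV G) (deg G) c0).
by rewrite inE.
Qed.

Lemma rootsG (v : 'I_N) : is_root G v <-> (v < m)%N.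
Proof.
split.
  move=> [_]. rewrite nmaxG. case: (ltnP v m) => // h. rewrite deg_l //. lia.
move=> h. split; first by rewrite inE. by rewrite nmaxG deg_c.
Qed.


Lemma pt_ne_c (i c : 'I_N) : (i < m)%N -> (c < m)%N -> (pt i == c) = false.
Proof. move=> hi hc. apply/negbTE/eqP => e. move: (pt_lt i). by rewrite e hc hi. Qed.

Lemma setD_noL (L A : {set 'I_N}) : (forall k, k \in A -> k \notin L) -> A :\: L = A.
Proof.
move=> H. apply/setP => k. rewrite in_setD.
case: (boolP (k \in A)) => h; rewrite ?andbF ?andbT //. exact: H.
Qed.

Lemma expect_Istar (H : graph N) (r : 'I_N) (rho : 'M[algC]_(2 ^ N)) :
  expect (Istar H r) rho = sqrtC 2 * (nmax H)%:R * expect (stab H r) rho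
   + sqrtC 2 * \sum_(i in nbrs H r) expect (stab H i) rho
   + \sum_(i in gV H :\: (r |: nbrs H r)) expect (stab H i) rho.
Proof.
by rewrite /expect /Istar !mulmxDl !mxtraceD -!scalemxAl !mxtraceZ !mulmx_suml !raddf_sum.
Qed.

Section Main.
Variable L : {set 'I_N}.
Variable psi : 'cV[algC]_(2 ^ N).
Variable j : 'I_N.
Hypothesis hL : L \subset leaves N m.
Hypothesis hj : (j < m)%N.
Hypothesis hlj : forall l : 'I_N, l \in L -> val l <> (m + j)%N.
Hypothesis hgs : is_graph_state G psi.
Notation rho := (lost_state L psi).
Notation G' := (induced G L).

Lemma Lleaf l : l \in L -> (m <= l)%N.
Proof. move=> h. have := subsetP hL l h. by rewrite inE. Qed.

Lemma notL_c (i : 'I_N) : (i < m)%N -> i \notin L.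
Proof. move=> h. apply/negP => /Lleaf. lia. Qed.

Lemma ptj : pt j \notin L.
Proof. apply/negP => /hlj. rewrite pt_val hj. lia. Qed.

Lemma stabG i : stab G i *m psi = psi.
Proof. case: hgs => h _. apply: h. by rewrite inE. Qed.

Lemma normG : \sum_a psi a 0 * (psi a 0)^* = 1.
Proof. by case: hgs. Qed.

Definition w i := expect (stab G i) rho.

Lemma w_val (i : 'I_N) : w i = ((if (i < m)%N then pt i else i) \notin L)%:R.
Proof.
case: (boolP (i \in L)) => iL.
  have hi := Lleaf iL. rewrite /w expect_stab_in // ifF ?iL //. lia.
rewrite /w expect_stab_out //.
case: (ltnP i m) => hi.
  case: (boolP (pt i \in L)) => pL.
    have -> : nbrs G i :\: L = nbrs G i :\ pt i.
      apply/setP => k. rewrite in_setD in_setD1.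
      case: (boolP (k \in nbrs G i)) => kN; rewrite ?andbF ?andbT //.
      move: kN. rewrite nbrs_c // => /andP [_ /orP [hk|/eqP ->]].
        rewrite notL_c //. apply/esym/eqP => e. move: hk. by rewrite e pt_lt hi.
      by rewrite pL eqxx.
    rewrite (Q0 (stabG i) (stabG (pt i))) ?hi ?pL //.
    - by rewrite nbrs_c // pt_neq eqxx orbT.
    - by rewrite pt_neq.
    - rewrite nbrs_leaf ?ptK //. by rewrite leqNgt pt_lt hi.
  rewrite setD_noL.
    by rewrite (Q1 (stabG i) normG).
  move=> k. rewrite nbrs_c // => /andP [_ /orP [hk|/eqP ->]] //. exact: notL_c.
rewrite setD_noL.
  by rewrite (Q1 (stabG i) normG) ?iL.
move=> k. rewrite nbrs_leaf // inE => /eqP ->. apply: notL_c. by rewrite pt_lt -leqNgt.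
Qed.

Lemma nbrsG' i : nbrs G' i = nbrs G i :\: L.
Proof. apply/setP => k. rewrite !inE /=. by case: (k \in L). Qed.

Lemma w'_val i : i \notin L -> expect (stab G' i) rho = w i.
Proof. move=> iL. by rewrite /w !expect_stab_out // nbrsG' setDDl setUid. Qed.

Lemma w_L i : i \in L -> w i = 0.
Proof.
move=> iL. rewrite w_val ifF ?iL //. apply/negbTE. rewrite -leqNgt. exact: Lleaf.
Qed.

Definition S1 := \sum_(i : 'I_N | (i < m)%N) ((pt i \notin L)%:R : algC).

Lemma sum_nbrs : \sum_(i in nbrs G j) w i = S1.
Proof.
rewrite big_mkcond split_sum. apply: eq_bigr => i hi.
rewrite !w_val hi pt_lt hi /= !nbrs_c // pt_ne_c // hi /= pt_lt hi /=.
rewrite (inj_eq (inv_inj ptK)).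
by case: (i == j) => /=; rewrite ?addr0 ?add0r.
Qed.

Lemma sum_non : \sum_(i in [set: 'I_N] :\: (j |: nbrs G j)) w i = S1 - 1.
Proof.
rewrite big_mkcond split_sum.
rewrite /S1 (bigD1 j) //= [X in _ = X - _](bigD1 j) //= (negbTE ptj) /=.
rewrite [1 + _]addrC addrK.
rewrite ifF; last by rewrite in_setD in_setU1 eqxx.
rewrite ifF; last by rewrite in_setD in_setU1 nbrs_c // pt_neq eqxx /= orbT.
rewrite !add0r.
apply: eq_bigr => i /andP [hi ij].
rewrite !in_setD !in_setU1 !nbrs_c // hi /= (negbTE ij) pt_ne_c //= pt_lt hi /=.
rewrite (inj_eq (inv_inj ptK)) (negbTE ij) /= !w_val pt_lt hi /= !inE.
by rewrite add0r.
Qed.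

Lemma cardL : (#|L|%:R : algC) = \sum_(i : 'I_N | (i < m)%N) ((pt i \in L)%:R : algC).
Proof.
rewrite card_split natr_sum. apply: eq_bigr => i hi. by rewrite (negbTE (notL_c hi)).
Qed.

Lemma S1_val : S1 = m%:R - #|L|%:R.
Proof.
rewrite cardL -{1}K_eq natr_sum -sumrB /S1. apply: eq_bigr => i _.
by case: (pt i \in L); rewrite /= ?subrr ?subr0.
Qed.

Lemma EG : expect (Istar G j) rho =
  sqrtC 2 * m%:R + sqrtC 2 * (m%:R - #|L|%:R) + (m%:R - #|L|%:R - 1).
Proof.
rewrite expect_Istar nmaxG. rewrite -/(w j) w_val hj (negbTE ptj) mulr1.
rewrite (eq_bigr w) // sum_nbrs.
rewrite (eq_bigr w) // sum_non S1_val. done.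
Qed.

Lemma nmaxG' : nmax G' = m.
Proof.
apply/eqP; rewrite eqn_leq; apply/andP; split.
  apply/bigmax_leqP => i _. rewrite /deg nbrsG'.
  apply: leq_trans (subset_leq_card (subsetDl _ _)) _.
  case: (ltnP i m) => h; first by rewrite -/(deg G i) deg_c.
  rewrite -/(deg G i) deg_l //; lia.
have jG : j \in gV G' by rewrite !inE notL_c.
have dj : deg G' j = m.
  rewrite /deg nbrsG' setD_noL; first by rewrite -/(deg G j) deg_c.
  move=> k. rewrite nbrs_c // => /andP [_ /orP [hk|/eqP ->]]; [exact: notL_c | exact: ptj].
rewrite -{1}dj. exact: (@leq_bigmax_cond _ (fun i => i \in gV G') (deg G') j).
Qed.

Lemma EG' : expect (Istar G' j) rho = expect (Istar G j) rho.
Proof.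
rewrite !expect_Istar nmaxG nmaxG' w'_val ?notL_c //.
congr (_ + _ * _ + _).
  rewrite nbrsG' big_mkcond [RHS]big_mkcond. apply: eq_bigr => i _.
  case: (boolP (i \in L)) => iL.
    rewrite in_setD iL /= -/(w i) w_L //. by case: ifP.
  by rewrite in_setD iL /= w'_val.
rewrite big_mkcond [RHS]big_mkcond. apply: eq_bigr => i _.
case: (boolP (i \in L)) => iL.
  rewrite !inE iL /= -/(w i) w_L // if_same andbF. by [].
rewrite w'_val // nbrsG' !inE iL /=. done.
Qed.

Lemma betaG' : betaC G' = m%:R + N%:R - #|L|%:R - 1.
Proof.
rewrite /betaC nmaxG' /= setTD.
have e := cardsC L. rewrite card_ord in e.
have e' : (N%:R : algC) = #|L|%:R + #|~: L|%:R by rewrite -natrD e.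
rewrite e'. set a := (#|L|%:R : algC). set b := (#|~: L|%:R : algC).
by rewrite [a + b]addrC addrA addrK.
Qed.

End Main.

End Dense.


Unset Implicit Arguments.

Theorem mainTheorem7 (m N : nat) (hm : (2 <= m)%N) (hN : N = (2 * m)%N) :
  let G := dense_center N m in
  nmax G = m /\
  (forall v : 'I_N, is_root G v <-> (v < m)%N) /\
  betaC G = 3 / 2 * N%:R - 1 /\
  (forall (L : {set 'I_N}) (j : 'I_N) (psi : 'cV[algC]_(2 ^ N)),
     L \subset leaves N m -> (#|L| < m)%N -> (j < m)%N ->
     (forall l : 'I_N, l \in L -> val l <> (m + j)%N) ->
     is_graph_state G psi ->
     let rho := lost_state L psi in
     let G' := induced G L in
     expect (Istar G j) rho = expect (Istar G' j) rho /\
     expect (Istar G' j) rho =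
       (2 * sqrtC (2 : algC) - 1) * m%:R + N%:R - 1 - (sqrtC (2 : algC) + 1) * #|L|%:R /\
     (betaC G' < expect (Istar G' j) rho <->
        #|L|%:R < (sqrtC (2 : algC) - 1) / sqrtC (2 : algC) * N%:R) /\
     (betaC G < expect (Istar G j) rho <->
        #|L|%:R < (sqrtC (2 : algC) - 1) / (sqrtC (2 : algC) + 1) * N%:R)).
Proof.
intros G; subst G.
have eN : (N%:R : algC) = 2 * m%:R by rewrite hN natrM.
have s0 : 0 < sqrtC (2 : algC) by rewrite sqrtC_gt0 ltr0n.
split; first exact: (nmaxG hm hN).
split; first exact: (rootsG hm hN).
have b0 : betaC (dense_center N m) = m%:R + N%:R - 1.
  by rewrite /betaC (nmaxG hm hN) /= cardsT card_ord.
split.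
  rewrite b0 eN. by field.
move=> L j psi hL hc hj hlj hgs rho G'; subst rho G'.
have e1 := EG' hm hN hL hj hlj hgs.
have e2 := EG hm hN hL hj hlj hgs.
have b1 := betaG' hm hN hL hj hlj.
rewrite e1 e2 b1 b0 eN.
set s := sqrtC (2 : algC). set l := (#|L|%:R : algC). set mm := (m%:R : algC).
have sn : s != 0 by rewrite gt_eqF.
have s1 : 0 < s + 1 by rewrite addr_gt0.
have s1n : s + 1 != 0 by rewrite gt_eqF.
split; first by [].
split; first by ring.
split.
  rewrite -(subr_gt0 (mm + 2 * mm - l - 1)) -(subr_gt0 l).
  have -> : (s - 1) / s * (2 * mm) - l =
    (s * mm + s * (mm - l) + (mm - l - 1) - (mm + 2 * mm - l - 1)) / s by field.
  by rewrite pmulr_lgt0 // invr_gt0.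
rewrite -(subr_gt0 (mm + 2 * mm - 1)) -(subr_gt0 l).
have -> : (s - 1) / (s + 1) * (2 * mm) - l =
  (s * mm + s * (mm - l) + (mm - l - 1) - (mm + 2 * mm - 1)) / (s + 1) by field.
by rewrite pmulr_lgt0 // invr_gt0.
Qed.
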